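(* In the brand-effects model, let the greedy allocation be defined by, for $k=1,\dots,s$ in order, placing in position $k$ the not-yet-placed ad with the highest normalized eCPM for position $k$. Then (i) for every instance, the total expected welfare of the greedy allocation is at least half of the maximum possible total expected welfare; and (ii) this bound is tight: for every $c>\frac12$ there is an instance in which the greedy allocation's total expected welfare is less than $c$ times the maximum possible total expected welfare.
   Context: Brand-effects model: there are $s$ positions and a set of advertisers, each either a brand advertiser or a non-brand advertiser; advertiser $i$ has quality score $q_i \ge 0$ and bid $b_i \ge 0$, and its eCPM bid is $b_i q_i$. Each position $k$ has two quality scores $\beta_k$ and $\eta_k$, both non-increasing in $k$, normalized so $\beta_1=\eta_1=1$. A brand (resp. non-brand) advertiser with quality $q$ shown in position $k$ is clicked with probability $\beta_k q$ (resp. $\eta_k q$). An allocation places distinct advertisers in the positions; its total expected welfare is $\sum_j b_{(j)} p_{(j)}$, where $b_{(j)}$ and $p_{(j)}$ are the bid and click probability of the ad in position $j$. The normalized eCPM of advertiser $i$ for position $k$ is $\beta_k b_i q_i$ if $i$ is a brand advertiser and $\eta_k b_i q_i$ if $i$ is a non-brand advertiser. *)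

(* Defs.v *)
From HB Require Import structures.
From mathcomp Require Import all_boot all_order all_algebra.
Set Implicit Arguments. Unset Strict Implicit. Unset Printing Implicit Defensive.
Import Order.TTheory GRing.Theory Num.Theory.
Local Open Scope ring_scope.

(* An instance: [nads] advertisers indexed by 'I_nads, [npos] positions
   indexed by 'I_npos (position k of the paper is the ordinal k-1). *)
Record instance (R : realFieldType) := Instance {
  nads  : nat;
  npos  : nat;
  brand : 'I_nads -> bool;
  qual  : 'I_nads -> R;
  bid   : 'I_nads -> R;
  beta  : 'I_npos -> R;      (* position quality for brand ads *)
  eta   : 'I_npos -> R       (* position quality for non-brand ads *)
}.

Arguments nads {R} _ : rename.
Arguments npos {R} _ : rename.
Arguments brand {R} _ : rename.
Arguments qual {R} _ : rename.
Arguments bid {R} _ : rename.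
Arguments beta {R} _ : rename.
Arguments eta {R} _ : rename.

Section Model.
Variable R : realFieldType.
Variable I : instance R.

Definition wf_instance : Prop :=
  [/\ forall i, 0 <= qual I i,
      forall i, 0 <= bid I i,
      forall k : 'I_(npos I), 0 <= beta I k /\ 0 <= eta I k,
      forall k l : 'I_(npos I), (k <= l)%N -> beta I l <= beta I k /\ eta I l <= eta I k
    & forall k : 'I_(npos I), nat_of_ord k = 0%N -> beta I k = 1 /\ eta I k = 1].

Definition click_prob (i : 'I_(nads I)) (k : 'I_(npos I)) : R :=
  (if brand I i then beta I k else eta I k) * qual I i.

Definition norm_ecpm (i : 'I_(nads I)) (k : 'I_(npos I)) : R :=
  (if brand I i then beta I k else eta I k) * (bid I i * qual I i).

Definition allocation := {ffun 'I_(npos I) -> option 'I_(nads I)}.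

Definition valid_alloc (a : allocation) : bool :=
  [forall k1, forall k2, forall i,
     ((a k1 == Some i) && (a k2 == Some i)) ==> (k1 == k2)].

Definition welfare (a : allocation) : R :=
  \sum_(k : 'I_(npos I))
     match a k with Some i => bid I i * click_prob i k | None => 0 end.

Definition opt_welfare : R :=
  \big[Num.max/0]_(a : allocation | valid_alloc a) welfare a.

Definition placed_before (a : allocation) (k : 'I_(npos I)) (i : 'I_(nads I)) : bool :=
  [exists k' : 'I_(npos I), (k' < k)%N && (a k' == Some i)].

(* a is a greedy allocation (with arbitrary tie-breaking): at each position k,
   in order, it places a not-yet-placed ad of maximum normalized eCPM for k,
   and leaves k empty only when every ad has already been placed. *)
Definition is_greedy (a : allocation) : Prop :=
  forall k : 'I_(npos I),
    match a k with
    | Some i => ~~ placed_before a k i /\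
                forall j, ~~ placed_before a k j -> norm_ecpm j k <= norm_ecpm i k
    | None => forall j, placed_before a k j
    end.

End Model.

(* Main.v *)
Require Import Defs.
From HB Require Import structures.
From mathcomp Require Import all_boot all_order all_algebra.
From mathcomp Require Import lra ring.
Import Order.TTheory GRing.Theory Num.Theory.
Local Open Scope ring_scope.

Section P1.
Variable R : realFieldType.
Variable I : instance R.
Hypothesis wf : wf_instance I.

Definition fa (a : allocation I) k :=
  match a k with Some i => norm_ecpm i k | None => 0 end.

Lemma welfareE a : welfare a = \sum_k fa a k.
Proof.
apply: eq_bigr => k _; rewrite /fa; case: (a k) => // i.
by rewrite /click_prob /norm_ecpm mulrCA.
Qed.

Lemma ecpm_ge0 (i : 'I_(nads I)) (k : 'I_(npos I)) : 0 <= norm_ecpm i k.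
Proof.
case: wf => hq hb hbe _ _.
rewrite /norm_ecpm; apply: mulr_ge0; last exact: mulr_ge0.
by case: (brand I i); case: (hbe k).
Qed.

Lemma fa_ge0 (a : allocation I) k : 0 <= fa a k.
Proof. by rewrite /fa; case: (a k) => // i; exact: ecpm_ge0. Qed.

Lemma ecpm_mono (i : 'I_(nads I)) (k k' : 'I_(npos I)) : (k' <= k)%N -> norm_ecpm i k <= norm_ecpm i k'.
Proof.
case: wf => hq hb hbe hm _ => hk.
rewrite /norm_ecpm; apply: ler_wpM2r; first exact: mulr_ge0.
by case: (brand I i); case: (hm _ _ hk).
Qed.

Definition h (a b : allocation I) k :=
  \sum_k' (if (a k' != None) && (a k' == b k) then fa a k' else 0).

Lemma point (a b : allocation I) k : is_greedy a -> fa b k <= fa a k + h a b k.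
Proof.
move=> ga.
have h0 : 0 <= h a b k.
  by apply: sumr_ge0 => k' _; case: ifP => _ //; exact: fa_ge0.
rewrite {1}/fa; case Hb: (b k) => [o|]; last first.
  by apply: addr_ge0 => //; exact: fa_ge0.
case Hp: (placed_before a k o).
  move/existsP: Hp => [k' /andP [lt /eqP Hk']].
  rewrite -[norm_ecpm o k]add0r; apply: lerD; first exact: fa_ge0.
  rewrite /h (bigD1 k') //= Hk' Hb eqxx /=.
  have -> : fa a k' = norm_ecpm o k' by rewrite /fa Hk'.
  apply: le_trans (ecpm_mono o k k' (ltnW lt)) _.
  rewrite lerDl; apply: sumr_ge0 => k'' _; case: ifP => _ //; exact: fa_ge0.
have := ga k; rewrite /fa; case: (a k) => [g|].
  move=> [_ H]; have := H o; rewrite Hp => /(_ isT) le.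
  by rewrite -[norm_ecpm o k]addr0; apply: lerD.
by move=> /(_ o); rewrite Hp.
Qed.

Lemma inner (a b : allocation I) k' : valid_alloc b ->
  \sum_k (if (a k' != None) && (a k' == b k) then fa a k' else 0) <= fa a k'.
Proof.
move=> vb.
case Ha: (a k') => [i|] /=; last by rewrite big1 // /fa Ha.
case: (boolP [exists k0, b k0 == Some i]) => [/existsP [k0 Hk0]|none].
  rewrite (bigD1 k0) //= eq_sym Hk0 /= big1 ?addr0 //.
  move=> k hk; case: ifP => // /eqP Hk.
  move/forallP: vb => /(_ k) /forallP /(_ k0) /forallP /(_ i).
  by rewrite -Hk eqxx (eqP Hk0) eqxx /= (negbTE hk).
rewrite big1 ?fa_ge0 // => k _; case: ifP => // /eqP Hk.
by move: none; rewrite negb_exists => /forallP /(_ k); rewrite -Hk eqxx.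
Qed.

Lemma bound (a b : allocation I) : is_greedy a -> valid_alloc b ->
  welfare b <= welfare a + welfare a.
Proof.
move=> ga vb; rewrite !welfareE.
apply: le_trans (_ : \sum_k (fa a k + h a b k) <= _).
  by apply: ler_sum => k _; exact: point.
rewrite big_split /=; apply: lerD => //.
rewrite /h exchange_big /=; apply: ler_sum => k' _; exact: inner.
Qed.

Lemma part1 (a : allocation I) : is_greedy a -> opt_welfare I / 2 <= welfare a.
Proof.
move=> ga.
have w0 : 0 <= welfare a by rewrite welfareE; apply: sumr_ge0 => k _; exact: fa_ge0.
suff : opt_welfare I <= welfare a + welfare a by lra.
rewrite /opt_welfare; apply: bigmax_le; first lra.
by move=> b vb; exact: bound.
Qed.

End P1.

Section P2.
Variable R : realFieldType.

Definition ex_inst (d : R) : instance R :=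
  @Instance R 2 2 (fun i : 'I_2 => i == ord0) (fun _ => 1)
    (fun i : 'I_2 => if i == ord0 then 1 else d) (fun _ => 1)
    (fun k : 'I_2 => if k == ord0 then 1 else 0).

Lemma ex_wf d : 0 <= d -> wf_instance (ex_inst d).
Proof.
move=> d0; split => //=.
- by move=> i; case: ifP.
- by move=> k; case: ifP.
- by move=> [[|[|k]] hk] [[|[|l]] hl] //= hkl; split => //.
- by move=> [[|[|k]] hk] //=.
Qed.

Lemma part2 (c : R) : 1 / 2 < c ->
     exists I : instance R, wf_instance I /\
       (exists a : allocation I, is_greedy a) /\
       (forall a : allocation I, is_greedy a -> welfare a < c * opt_welfare I).
Proof.
move=> hc; set d := (c *+ 2)^-1.
have cd : c * d = 1/2 by rewrite /d; field; lra.
have d0 : 0 <= d by rewrite /d invr_ge0; lra.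
have d1 : d < 1 by nra.
have cd1 : 1 < c * (1 + d) by nra.
exists (ex_inst d); split; first exact: ex_wf.
split.
  exists [ffun k : 'I_2 => Some k].
  move=> [[|[|k]] hk] //=; rewrite ffunE; split.
  - by apply/existsP => -[k' /andP []].
  - move=> j _; rewrite /norm_ecpm /=.
    case: j => [[|[|j]] hj] //=; rewrite !mul1r ?mulr1 //; lra.
  - apply/existsP => -[k' /andP [] ].
    by case: k' => [[|[|k']] hk'] //= _; rewrite ffunE.
  - move=> j; case: j => [[|[|j]] hj] //= hp.
    by case/negP: hp; apply/existsP; exists ord0; rewrite ffunE.
move=> a ga.
pose b : allocation (ex_inst d) := [ffun k : 'I_2 => Some (rev_ord k)].
have vb : valid_alloc b.
  apply/forallP => k1; apply/forallP => k2; apply/forallP => i; rewrite !ffunE.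
  apply/implyP => /andP [/eqP h1 /eqP h2]; move: h1; rewrite -h2 => -[].
  clear h2; by case: k1 => [[|[|k1]] ?]; case: k2 => [[|[|k2]] ?].
have wb : welfare b = 1 + d.
  rewrite /welfare !big_ord_recl big_ord0 !ffunE /= /click_prob /=.
  lra.
have optb : 1 + d <= opt_welfare (ex_inst d).
  by rewrite -wb /opt_welfare; apply: (le_bigmax_cond _ _ vb).
have np0 : forall i, ~~ placed_before a ord0 i.
  by move=> i; apply/existsP => -[k' /andP []].
have a0 : a ord0 = Some ord0.
  have := ga ord0; case E: (a ord0) => [i|]; last first.
    by move=> /(_ ord0); rewrite (negbTE (np0 _)).
  move=> [_ H]; move: (H _ (np0 ord0)); clear H; rewrite /norm_ecpm /=.
  case: i E => [[|[|i]] hi] //= E.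
    by move=> _; congr Some; apply: val_inj.
  rewrite !mul1r !mulr1 => h; exfalso; lra.
have a1 : a ord_max = Some ord_max.
  have := ga ord_max; case E: (a ord_max) => [i|].
    move=> [np _]; case: i E np => [[|[|i]] hi] //= E np.
      case/negP: np; apply/existsP; exists ord0; rewrite a0 /=.
      by apply/eqP; congr Some; apply: val_inj.
    by congr Some; apply: val_inj.
  move=> /(_ ord_max) /existsP [k' /andP [lt /eqP Ek]].
  case: k' lt Ek => [[|[|k']] hk'] //= _.
  move=> E2; suff : a ord0 = Some ord_max by rewrite a0.
  by rewrite -E2; congr (a _); apply: val_inj.
have wa : welfare a = 1.
  rewrite /welfare !big_ord_recl big_ord0.
  have -> : lift ord0 ord0 = ord_max :> 'I_2 by apply/val_inj.
  rewrite a0 a1 /click_prob /=; lra.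
rewrite wa; nra.
Qed.
End P2.

Theorem theorem6 (R : realFieldType) :
  (forall I : instance R, wf_instance I ->
     forall a : allocation I, is_greedy a -> opt_welfare I / 2 <= welfare a)
  /\
  (forall c : R, 1 / 2 < c ->
     exists I : instance R, wf_instance I /\
       (exists a : allocation I, is_greedy a) /\
       (forall a : allocation I, is_greedy a -> welfare a < c * opt_welfare I)).
Proof.
split; first by move=> I wf a; exact: part1.
exact: part2.
Qed.
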